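(* In the setting described in the context, the optimal value of \[ O(\mathbf y)=\min_{\tilde{\mathbf y}\in\{-1,1\}^n}\ \frac12\sum_{i=1}^n(1-y_i\tilde y_i)\quad\text{s.t.}\quad \operatorname{sign}(\hat p_t)\sum_{i=1}^n\tilde y_iQ_t^i<0 \] equals $k'=\min\{k\in\{1,\dots,n\}: P_k>S/2\}$, and this set is nonempty. Moreover, flipping exactly the labels of the training points indexed by $a_{(1)},\dots,a_{(k')}$ is an optimal solution.
   Context: Let $n\ge1$, let $Q_t^1,\dots,Q_t^n\in\mathbb R$, and let $\mathbf y\in\{-1,1\}^n$. Put $\hat p_t=\sum_{i=1}^n y_iQ_t^i$ and assume $\hat p_t\ne0$. Define $a_i=\operatorname{sign}(\hat p_t)\,y_iQ_t^i$ for $i\in[n]$ and $S=\sum_{i=1}^n a_i$, so that $S=|\hat p_t|>0$. Let $a_{(1)}\ge a_{(2)}\ge\dots\ge a_{(n)}$ be the $a_i$ sorted in nonincreasing order, and let $P_k=\sum_{j=1}^k a_{(j)}$. The quantity $\frac12\sum_i(1-y_i\tilde y_i)$ is the number of indices $i$ with $\tilde y_i\neq y_i$. *)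

(* Defs.v *)
From HB Require Import structures.
From mathcomp Require Import all_boot all_order all_algebra all_fingroup.
Set Implicit Arguments. Unset Strict Implicit. Unset Printing Implicit Defensive.
Import Order.TTheory GRing.Theory Num.Theory.
Local Open Scope ring_scope.

Section Defs.
Variables (R : realFieldType) (n : nat).

Definition pm1 (v : 'I_n -> R) : Prop := forall i, v i = 1 \/ v i = -1.

Definition phat (y Q : 'I_n -> R) : R := \sum_(i < n) y i * Q i.

Definition aval (y Q : 'I_n -> R) (i : 'I_n) : R := Num.sg (phat y Q) * (y i * Q i).

Definition Ssum (y Q : 'I_n -> R) : R := \sum_(i < n) aval y Q i.

(* P_k = sum of the k largest a's, given the sorting permutation s
   (a_(j+1) = a (s j) in 0-based indexing) *)
Definition Psum (y Q : 'I_n -> R) (s : 'S_n) (k : nat) : R :=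
  \sum_(j < n | (j < k)%N) aval y Q (s j).

Definition sorts_noninc (y Q : 'I_n -> R) (s : 'S_n) : Prop :=
  forall j1 j2 : 'I_n, (j1 <= j2)%N -> aval y Q (s j2) <= aval y Q (s j1).

Definition flip_cost (y yt : 'I_n -> R) : R := 2^-1 * \sum_(i < n) (1 - y i * yt i).

Definition feasible (y Q yt : 'I_n -> R) : Prop :=
  Num.sg (phat y Q) * (\sum_(i < n) yt i * Q i) < 0.

Definition good_k (y Q : 'I_n -> R) (s : 'S_n) (k : nat) : Prop :=
  [/\ (1 <= k)%N, (k <= n)%N & Ssum y Q / 2 < Psum y Q s k].

(* flip exactly the labels of the points indexed by a_(1),...,a_(k) *)
Definition flipped (y : 'I_n -> R) (s : 'S_n) (k : nat) (i : 'I_n) : R :=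
  if ((s^-1)%g i < k)%N then - y i else y i.

End Defs.

(* Main.v *)
Require Import Defs.
From HB Require Import structures.
From mathcomp Require Import all_boot all_order all_algebra all_fingroup.
From mathcomp Require Import ring lra.
Import Order.TTheory GRing.Theory Num.Theory.
Local Open Scope ring_scope.

Lemma ind_sum (R : realFieldType) (I : finType) (P : pred I) (b : I -> R) :
  \sum_(j | P j) b j = \sum_j (P j)%:R * b j.
Proof.
rewrite big_mkcond; apply: eq_bigr => j _; case: (P j); rewrite ?mul1r ?mul0r //.
Qed.

Lemma ind_card (R : realFieldType) (I : finType) (P : pred I) :
  \sum_j ((P j)%:R : R) = #|P|%:R.
Proof.
rewrite -sum1_card natr_sum [RHS]big_mkcond /=; apply: eq_bigr => j _.
by rewrite -[j \in P]/(P j); case: (P j).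
Qed.

Lemma key (R : realFieldType) n (b : 'I_n -> R) (P : pred 'I_n) :
 (forall j1 j2 : 'I_n, (j1 <= j2)%N -> b j2 <= b j1) ->
 \sum_(j | P j) b j <= \sum_(j < n | (j < #|P|)%N) b j.
Proof.
case: n b P => [|n] b P hb; first by rewrite !big_ord0.
have kn : (#|P| <= n.+1)%N by rewrite -[X in (_ <= X)%N]card_ord max_card.
set k := #|P| in kn *.
set t := b (inord (minn k n)).
have e : \sum_(j | P j) b j - \sum_(j < n.+1 | (j < k)%N) b j =
   \sum_j ((P j)%:R - (j < k)%N%:R) * (b j - t).
  have ek : \sum_(j < n.+1) ((j < k)%N%:R : R) = k%:R.
    rewrite (_ : \sum_(j < n.+1) ((j < k)%N%:R : R) = \sum_(j < n.+1 | (j < k)%N) 1).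
      by rewrite (big_ord_narrow kn) sumr_const card_ord.
    by rewrite [RHS]big_mkcond; apply: eq_bigr => j _; case: ifP.
  rewrite (ind_sum _ _ P) (ind_sum _ _ (fun j : 'I_n.+1 => (j < k)%N)).
  under [RHS]eq_bigr => j _ do rewrite mulrBl mulrBr mulrBr.
  rewrite !big_split /= !sumrN -!mulr_suml (ind_card _ _ P) sumrB -mulr_suml ek. lra.
rewrite -subr_le0 e; apply: sumr_le0 => j _.
case: (ltnP j k) => hj.
  rewrite mulr_le0_ge0 //; first by case: (P j); rewrite ?subrr ?sub0r ?oppr_le0.
  rewrite subr_ge0 /t; apply: hb; rewrite inordK; last by rewrite ltnS geq_minr.
  by rewrite leq_min (ltnW hj) -ltnS ltn_ord.
rewrite subr0 mulr_ge0_le0 //.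
rewrite subr_le0 /t; apply: hb; rewrite inordK; last by rewrite ltnS geq_minr.
by rewrite (leq_trans (geq_minl _ _)).
Qed.

Lemma gen_flip (R : realFieldType) (n : nat) (Q y : 'I_n -> R) (F : pred 'I_n)
  (yt : 'I_n -> R) :
  pm1 y -> (forall i, yt i = if F i then - y i else y i) ->
  flip_cost y yt = #|F|%:R /\
  Num.sg (phat y Q) * (\sum_(i < n) yt i * Q i) =
     Ssum y Q - 2 * \sum_(i | F i) aval y Q i.
Proof.
move=> hy hyt.
have hy2 i : y i * y i = 1 by case: (hy i) => ->; rewrite ?mulr1 ?mulrNN ?mulr1.
split.
  rewrite /flip_cost (_ : \sum_(i < n) (1 - y i * yt i) = 2 * \sum_i (F i)%:R).
    by rewrite mulrA mulVf ?mul1r ?ind_card // pnatr_eq0.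
  rewrite mulr_sumr; apply: eq_bigr => i _.
  rewrite hyt; case: (F i); rewrite ?mulrN hy2 /=; lra.
rewrite (ind_sum _ _ F) mulr_sumr mulr_sumr /Ssum -sumrB; apply: eq_bigr => i _.
rewrite /aval hyt; move: (hy2 i); case: (F i) => /= h.
  ring.
ring.
Qed.

Lemma card_lt (n k : nat) : (k <= n)%N -> #|[pred j : 'I_n | (j < k)%N]| = k.
Proof.
move=> kn; rewrite -sum1_card.
rewrite (_ : (\sum_(i in [pred j : 'I_n | (j < k)%N]) 1)%N = (\sum_(j < n | (j < k)%N) 1)%N) //.
by rewrite (big_ord_narrow kn) sum1_card card_ord.
Qed.

Theorem mainTheorem7 (R : realFieldType) (n : nat) (Q y : 'I_n -> R)
    (s : 'S_n) :
  (1 <= n)%N -> pm1 y -> phat y Q != 0 -> sorts_noninc y Q s ->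
  (exists k : nat, good_k y Q s k) /\
  (forall k' : nat,
     good_k y Q s k' -> (forall k : nat, good_k y Q s k -> (k' <= k)%N) ->
     [/\ pm1 (flipped y s k'),
         feasible y Q (flipped y s k'),
         flip_cost y (flipped y s k') = k'%:R &
         forall yt : 'I_n -> R, pm1 yt -> feasible y Q yt ->
           k'%:R <= flip_cost y yt]).
Proof.
move=> n1 hy hp hs.
have hS : 0 < Ssum y Q.
  rewrite /Ssum /aval -mulr_sumr -/(phat y Q) -normrEsg normr_gt0 //.
have reid (P : pred 'I_n) : \sum_(i | P i) aval y Q i = \sum_(j | P (s j)) aval y Q (s j).
  exact: (reindex_inj perm_inj).
have recard (P : pred 'I_n) : #|P| = #|[pred j | P (s j)]|.
  rewrite -!sum1_card; exact: (reindex_inj perm_inj).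
split.
  exists n; split => //; rewrite /Psum.
  rewrite (eq_bigl xpredT) ?(reid xpredT) -?(reid xpredT) -/(Ssum y Q); first lra.
  by move=> j; rewrite ltn_ord.
move=> k' [k1 kn hk] kmin.
have flipE i : flipped y s k' i = if ((s^-1)%g i < k')%N then - y i else y i by [].
have [hc hf] := gen_flip _ _ Q _ _ _ hy flipE.
have eF : \sum_(i | ((s^-1)%g i < k')%N) aval y Q i = Psum y Q s k'.
  rewrite reid /Psum; apply: eq_bigl => j; by rewrite permK.
have cF : #|[pred i | ((s^-1)%g i < k')%N]| = k'.
  rewrite recard -[RHS](card_lt _ _ kn); apply: eq_card => j; by rewrite !inE permK.
split.
- move=> i; rewrite flipE; case: (hy i) => ->; case: ifP => _; rewrite ?opprK; by [left|right].
- rewrite /feasible hf eF; lra.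
- by rewrite hc cF.
move=> yt hyt hfe.
set F := [pred i | yt i != y i].
have ytE i : yt i = if F i then - y i else y i.
  rewrite inE; case: (hy i) => hi; case: (hyt i) => ht; rewrite hi ht ?eqxx //=;
    rewrite ifT ?opprK //; apply/eqP => e; lra.
have [hc2 hf2] := gen_flip _ _ Q _ _ _ hy ytE.
rewrite hc2 ler_nat; apply: kmin.
have hkey := key _ _ (fun j => aval y Q (s j)) [pred j | F (s j)] hs.
rewrite -reid -recard in hkey.
move: hfe; rewrite /feasible hf2 => hfe.
split.
- rewrite lt0n; apply/negP => /eqP h0.
  move: hkey; rewrite h0 [X in _ <= X]big_pred0 // => hk0; lra.
- by rewrite -[X in (_ <= X)%N]card_ord max_card.
- rewrite /Psum; lra.
Qed.
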